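(* Let $L$ be a finite set of horizontal line segments in an axis-parallel rectangle $R$ of height $h$, let $\rho>0$, and let $S_1,\dots,S_t$, $t=\lceil h/(\sqrt3\rho)\rceil$, be the horizontal strips of $R$ of width $\sqrt3\rho$. Let $Q_j$ and $Z_j$ ($j=1,\dots,t$) be the output point set and the number of iterations of the strip-greedy procedure described in the context, applied to strip $S_j$. Then (a) $\bigcup_{j=1}^t Q_j$ covers every segment of $L$ and $\left|\bigcup_{j=1}^t Q_j\right| \le 6\,OPT_h$, and (b) $\frac13\sum_{j=1}^t Z_j \le OPT_h$, where $OPT_h$ is the minimum number of sensors of range $\rho$ needed to cover all segments of $L$.
   Context: A sensor at point $s$ with range $\rho$ covers a segment $\ell$ if $\operatorname{dist}(s,\ell)\le\rho$; the hippodrome $H(\ell,\rho)$ is the set of points at distance at most $\rho$ from $\ell$. Write $R=[x_0,x_m]\times[y_0,y_0+h]$ and $S_i = R\cap\{y_0+(i-1)\sqrt3\rho \le y < y_0+i\sqrt3\rho\}$ (the last strip closed at the top); each horizontal segment lies in exactly one strip, and $L_i$ denotes the segments of $L$ lying in $S_i$. Strip-greedy procedure for $S_i$: set $Q_i=\emptyset$ and repeat while $L_i\neq\emptyset$: let $\ell_1\in L_i$ be the segment whose right endpoint $v_1$ has the smallest $x$-coordinate; let $L_i^1$ be the set of segments of $L_i$ whose hippodromes intersect $H(\ell_1,\rho)$ (i.e. at distance at most $2\rho$ from $\ell_1$); let $C$ be the $2\rho\times\sqrt3\rho$ rectangle inside $S_i$ (spanning the strip vertically) whose left side lies on the vertical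 line through $v_1$; split $C$ into two $\rho\times\sqrt3\rho$ rectangles and add their two centers to $Q_i$ (each of these rectangles is contained in the disk of radius $\rho$ about its center); delete $L_i^1\cup\{\ell_1\}$ from $L_i$. $Z_i$ is the number of iterations performed, so $|Q_i|=2Z_i$. *)

(* Defs.v *)
From Stdlib Require Import Reals Lra List.
Import ListNotations.
Open Scope R_scope.

Definition point : Type := (R * R)%type.

(* A horizontal segment {(x, sy) | sxl <= x <= sxr}. *)
Record hseg : Type := HSeg { sy : R; sxl : R; sxr : R }.

(* Euclidean distance from point p to the (closed) horizontal segment l
   (assuming sxl l <= sxr l): the nearest point of l is obtained by clamping
   the x-coordinate into [sxl l, sxr l]. *)
Definition dist_pt_seg (p : point) (l : hseg) : R :=
  let cx := Rmax (sxl l) (Rmin (fst p) (sxr l)) in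
  sqrt ((fst p - cx) ^ 2 + (snd p - sy l) ^ 2).

Definition covers_seg (rho : R) (s : point) (l : hseg) : Prop :=
  dist_pt_seg s l <= rho.

Definition hippodrome (l : hseg) (rho : R) (p : point) : Prop :=
  dist_pt_seg p l <= rho.

Definition hipp_intersect (rho : R) (l1 l2 : hseg) : Prop :=
  exists p : point, hippodrome l1 rho p /\ hippodrome l2 rho p.

Definition covers_all (rho : R) (P : point -> Prop) (L : list hseg) : Prop :=
  forall l, In l L -> exists s, P s /\ covers_seg rho s l.

Definition is_opt (rho : R) (L : list hseg) (n : nat) : Prop :=
  (exists P : list point, length P = n /\ covers_all rho (fun s => In s P) L) /\
  (forall P : list point, covers_all rho (fun s => In s P) L -> (n <= length P)%nat).

Definition seg_in_rect (x0 xm y0 h : R) (l : hseg) : Prop :=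
  x0 <= sxl l /\ sxl l <= sxr l /\ sxr l <= xm /\ y0 <= sy l /\ sy l <= y0 + h.

(* Segment l (inside R) lies in strip S_i, i in 1..t; the last strip S_t
   is closed at the top (and bounded above by the top of R). *)
Definition in_strip (y0 rho : R) (t i : nat) (l : hseg) : Prop :=
  (1 <= i <= t)%nat /\
  y0 + (INR i - 1) * (sqrt 3 * rho) <= sy l /\
  (sy l < y0 + INR i * (sqrt 3 * rho) \/ i = t).

(* The two centers added in an iteration of the strip-greedy procedure for
   strip S_i, when the chosen segment has right endpoint x-coordinate xr:
   C = [xr, xr + 2 rho] x [y0+(i-1)sqrt3 rho, y0+i sqrt3 rho] is split into
   two rho x sqrt3 rho rectangles, whose centers are returned. *)
Definition center1 (y0 rho : R) (i : nat) (xr : R) : point :=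
  (xr + rho / 2, y0 + (INR i - 1) * (sqrt 3 * rho) + sqrt 3 * rho / 2).
Definition center2 (y0 rho : R) (i : nat) (xr : R) : point :=
  (xr + 3 * rho / 2, y0 + (INR i - 1) * (sqrt 3 * rho) + sqrt 3 * rho / 2).

(* Ties in the choice of l1 may be broken arbitrarily. *)
Inductive greedy_run (y0 rho : R) (i : nat) : list hseg -> list point -> nat -> Prop :=
| greedy_done : forall Li, Li = [] -> greedy_run y0 rho i Li [] 0
| greedy_step : forall Li l1 Li' Q Z,
    In l1 Li ->
    (forall l, In l Li -> sxr l1 <= sxr l) ->
    (forall l, In l Li' <-> (In l Li /\ l <> l1 /\ ~ hipp_intersect rho l l1)) ->
    greedy_run y0 rho i Li' Q Z ->
    greedy_run y0 rho i Li (center1 y0 rho i (sxr l1) :: center2 y0 rho i (sxr l1) :: Q) (S Z).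

Definition card_le (P : point -> Prop) (n : nat) : Prop :=
  exists U : list point, NoDup U /\ (forall p, In p U <-> P p) /\ (length U <= n)%nat.

(* Main.v *)
Require Import Defs.
From Stdlib Require Import Reals List.
From Stdlib Require Import Lra Lia Psatz Classical ClassicalEpsilon.
Import ListNotations.
Open Scope R_scope.

Lemma clamp_bounds a b x : a <= b -> a <= Rmax a (Rmin x b) <= b.
Proof. intros. unfold Rmax, Rmin; repeat destruct Rle_dec; lra. Qed.

Lemma clamp_near a b x z : a <= z <= b ->
  (x - Rmax a (Rmin x b))^2 <= (x - z)^2.
Proof. intros. unfold Rmax, Rmin; repeat destruct Rle_dec; simpl; try nra.
  all: replace (x - x) with 0 by ring; pose proof (pow2_ge_0 (x - z)); simpl in *; lra.
Qed.

Lemma sqrt_ge_l u v : u <= sqrt (u^2 + v^2).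
Proof.
  destruct (Rle_dec u 0). { pose proof (sqrt_pos (u^2+v^2)); lra. }
  rewrite <- (sqrt_pow2 u) at 1 by lra. apply sqrt_le_1_alt. nra.
Qed.

Lemma sqrt_ge_r u v : Rabs v <= sqrt (u^2 + v^2).
Proof.
  rewrite <- (sqrt_pow2 (Rabs v)) by apply Rabs_pos. apply sqrt_le_1_alt.
  unfold Rabs; destruct Rcase_abs; nra.
Qed.

Lemma dist_y p l : Rabs (snd p - sy l) <= dist_pt_seg p l.
Proof. unfold dist_pt_seg. apply sqrt_ge_r. Qed.

Lemma dist_le p l z rho : 0 <= rho -> sxl l <= z <= sxr l ->
  (fst p - z)^2 + (snd p - sy l)^2 <= rho^2 -> dist_pt_seg p l <= rho.
Proof.
  intros Hr Hz H. unfold dist_pt_seg.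
  rewrite <- (sqrt_pow2 rho) by lra. apply sqrt_le_1_alt.
  pose proof (clamp_near (sxl l) (sxr l) (fst p) z Hz). lra.
Qed.

Lemma sqrt3_sq : sqrt 3 * sqrt 3 = 3.
Proof. apply sqrt_sqrt; lra. Qed.

Lemma sqrt3_gt1 : 1 < sqrt 3.
Proof. rewrite <- sqrt_1. apply sqrt_lt_1_alt; lra. Qed.

Lemma geom y0 rho i xr l : 0 < rho -> sxl l <= sxr l -> xr <= sxr l ->
  sxl l <= xr + 2 * rho ->
  y0 + (INR i - 1) * (sqrt 3 * rho) <= sy l <= y0 + (INR i - 1) * (sqrt 3 * rho) + sqrt 3 * rho ->
  covers_seg rho (center1 y0 rho i xr) l \/ covers_seg rho (center2 y0 rho i xr) l.
Proof.
  intros Hr H1 H2 H3 Hy. unfold covers_seg, center1, center2.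
  set (lo := y0 + (INR i - 1) * (sqrt 3 * rho)) in *.
  set (s := sqrt 3) in *.
  assert (Hs : s * s = 3) by apply sqrt3_sq.
  assert (Hs1 : 1 < s) by apply sqrt3_gt1.
  assert (Hd : (lo + s * rho / 2 - sy l)^2 <= 3 * rho^2 / 4).
  { set (d := lo + s * rho / 2 - sy l).
    assert (-(s*rho/2) <= d <= s*rho/2) by (unfold d; lra).
    assert (0 <= (s*rho/2 - d) * (s*rho/2 + d)) by nra. nra. }
  set (xs := Rmax (sxl l) xr).
  assert (Hx : sxl l <= xs <= sxr l /\ xr <= xs <= xr + 2*rho)
    by (unfold xs, Rmax; destruct Rle_dec; lra).
  destruct (Rle_dec xs (xr + rho)).
  - left. apply dist_le with xs; simpl; try lra.
    assert ((xr + rho/2 - xs)^2 <= rho^2/4) by nra. lra.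
  - right. apply dist_le with xs; simpl; try lra.
    assert ((xr + 3*rho/2 - xs)^2 <= rho^2/4) by nra. lra.
Qed.

Lemma hipp_sym rho a b : hipp_intersect rho a b -> hipp_intersect rho b a.
Proof. intros [p [H1 H2]]. exists p. tauto. Qed.

Lemma hipp_gap rho l l1 : sxl l1 <= sxr l1 ->
  hipp_intersect rho l l1 -> sxl l <= sxr l1 + 2 * rho.
Proof.
  intros Hl1 [p [H1 H2]]. unfold hippodrome, dist_pt_seg in *. cbv zeta in *.
  pose proof (sqrt_ge_l (fst p - Rmax (sxl l1) (Rmin (fst p) (sxr l1))) (snd p - sy l1)).
  pose proof (sqrt_ge_l (Rmax (sxl l) (Rmin (fst p) (sxr l)) - fst p) (snd p - sy l)).
  replace ((Rmax (sxl l) (Rmin (fst p) (sxr l)) - fst p)^2) with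
    ((fst p - Rmax (sxl l) (Rmin (fst p) (sxr l)))^2) in H0 by ring.
  assert (Rmax (sxl l) (Rmin (fst p) (sxr l)) >= sxl l) by (unfold Rmax; destruct Rle_dec; lra).
  pose proof (clamp_bounds _ _ (fst p) Hl1).
  lra.
Qed.

Lemma greedy_len y0 rho i Li Q Z : greedy_run y0 rho i Li Q Z -> length Q = (2 * Z)%nat.
Proof. induction 1; simpl; lia. Qed.

Lemma greedy_cover y0 rho i Li Q Z : 0 < rho -> greedy_run y0 rho i Li Q Z ->
  (forall l, In l Li -> sxl l <= sxr l /\
     y0 + (INR i - 1) * (sqrt 3 * rho) <= sy l <= y0 + (INR i - 1) * (sqrt 3 * rho) + sqrt 3 * rho) ->
  forall l, In l Li -> exists p, In p Q /\ covers_seg rho p l.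
Proof.
  intros Hr H. induction H as [Li E|Li l1 Li' Q Z Hin Hmin Hiff Hrun IH]; intros Hinv l Hl.
  - subst; destruct Hl.
  - destruct (classic (In l Li')) as [Hl'|Hl'].
    + destruct (IH ltac:(intros l' Hl''; apply Hinv; apply Hiff in Hl''; tauto) l Hl') as [p [Hp Hc]].
      exists p; split; [right; right; exact Hp|exact Hc].
    + assert (Hg : sxl l <= sxr l1 + 2 * rho).
      { destruct (classic (l = l1)) as [->|Hne].
        - destruct (Hinv l1 Hin); lra.
        - destruct (classic (hipp_intersect rho l l1)) as [Hh|Hh].
          + apply hipp_gap; [apply (Hinv l1 Hin)|exact Hh].
          + exfalso; apply Hl'; apply Hiff; tauto. }
      destruct (Hinv l Hl) as [Ha Hb].
      destruct (geom y0 rho i (sxr l1) l Hr Ha (Hmin l Hl) Hg Hb) as [Hc|Hc].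
      * exists (center1 y0 rho i (sxr l1)); split; [left; reflexivity|exact Hc].
      * exists (center2 y0 rho i (sxr l1)); split; [right; left; reflexivity|exact Hc].
Qed.

Lemma greedy_chosen y0 rho i Li Q Z : greedy_run y0 rho i Li Q Z ->
  exists C, length C = Z /\ (forall c, In c C -> In c Li) /\ NoDup C /\
    (forall a b, In a C -> In b C -> hipp_intersect rho a b -> a = b).
Proof.
  induction 1 as [Li E|Li l1 Li' Q Z Hin Hmin Hiff Hrun IH].
  - exists []; simpl; repeat split; try tauto. constructor.
  - destruct IH as [C [H1 [H2 [H3 H4]]]].
    exists (l1 :: C); simpl; repeat split.
    + lia.
    + intros c [<-|Hc]; [exact Hin|]. apply H2 in Hc; apply Hiff in Hc; tauto.
    + constructor; [|exact H3]. intros Hc. apply H2 in Hc; apply Hiff in Hc. tauto.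
    + intros a b [<-|Ha] [<-|Hb] Hh; try reflexivity.
      * apply hipp_sym in Hh. apply H2 in Hb; apply Hiff in Hb. tauto.
      * apply H2 in Ha; apply Hiff in Ha. tauto.
      * apply H4; assumption.
Qed.

Definition dec (P : Prop) : nat := if excluded_middle_informative P then 1%nat else 0%nat.

Lemma dec_mono (P Q : Prop) : (P -> Q) -> (dec P <= dec Q)%nat.
Proof. intros H. unfold dec; do 2 destruct excluded_middle_informative; tauto || lia. Qed.

Lemma dec_le1 P : (dec P <= 1)%nat.
Proof. unfold dec; destruct excluded_middle_informative; lia. Qed.

Lemma dec_one P : dec P = 1%nat -> P.
Proof. unfold dec; destruct excluded_middle_informative; [tauto|discriminate]. Qed.

Lemma sum_mono {A} (f g : A -> nat) l : (forall x, In x l -> (f x <= g x)%nat) ->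
  (list_sum (map f l) <= list_sum (map g l))%nat.
Proof.
  induction l; simpl; intros H; [lia|].
  pose proof (H a (or_introl eq_refl)). assert (list_sum (map f l) <= list_sum (map g l))%nat
    by (apply IHl; intros; apply H; auto). lia.
Qed.

Lemma sum_add {A} (f g : A -> nat) l :
  list_sum (map (fun x => f x + g x)%nat l) = (list_sum (map f l) + list_sum (map g l))%nat.
Proof. induction l; simpl; lia. Qed.

Lemma sum_zero {A} (l : list A) : list_sum (map (fun _ => 0%nat) l) = 0%nat.
Proof. induction l; simpl; lia. Qed.

Lemma sum_swap {A B} (g : A -> B -> nat) (J : list A) (P : list B) :
  list_sum (map (fun j => list_sum (map (fun p => g j p) P)) J) =
  list_sum (map (fun p => list_sum (map (fun j => g j p) J)) P).
Proof.
  induction J as [|j J IH]; simpl.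
  - rewrite sum_zero; reflexivity.
  - rewrite IH, <- sum_add. reflexivity.
Qed.

Lemma sum_const {A} (f : A -> nat) c l : (forall x, In x l -> (f x <= c)%nat) ->
  (list_sum (map f l) <= c * length l)%nat.
Proof.
  induction l; simpl; intros H; [lia|].
  pose proof (H a (or_introl eq_refl)). assert (list_sum (map f l) <= c * length l)%nat
    by (apply IHl; intros; apply H; auto). lia.
Qed.

Lemma sum0 (f : nat -> nat) b n : (forall k, (b <= k < b + n)%nat -> f k = 0%nat) ->
  list_sum (map f (seq b n)) = 0%nat.
Proof.
  revert b; induction n; intros b H; simpl; [reflexivity|].
  rewrite H by lia. rewrite IHn; [reflexivity|]. intros; apply H; lia.
Qed.

Lemma sum3 (f : nat -> nat) a n : (forall k, (f k <= 1)%nat) ->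
  (forall j k, (a <= j)%nat -> (k < a + n)%nat -> f j = 1%nat -> f k = 1%nat -> (j + 3 <= k)%nat -> False) ->
  (list_sum (map f (seq a n)) <= 3)%nat.
Proof.
  intros H1. revert a; induction n; intros a H; simpl; [lia|].
  destruct (f a) as [|[|m]] eqn:Ea.
  - apply IHn. intros j k ? ? ? ?; apply (H j k); lia.
  - destruct n as [|[|n]]; simpl.
    + lia.
    + pose proof (H1 (S a)); lia.
    + rewrite sum0.
      * pose proof (H1 (S a)); pose proof (H1 (S (S a))); lia.
      * intros k Hk. pose proof (H1 k). destruct (f k) as [|[|]] eqn:Ek; try lia.
        exfalso; apply (H a k); lia.
  - pose proof (H1 a); lia.
Qed.

Lemma filter_id {A} (g : A -> bool) l : (forall x, In x l -> g x = true) -> filter g l = l.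
Proof. induction l; simpl; intros H; [reflexivity|]. rewrite H by auto. rewrite IHl; auto. Qed.

Lemma len_filter1 {A} (g : A -> bool) C : NoDup C ->
  (forall a b, In a C -> In b C -> g a = true -> g b = true -> a = b) ->
  (length C <= S (length (filter (fun c => negb (g c)) C)))%nat.
Proof.
  induction C as [|c C IH]; simpl; intros Hn H; [lia|].
  inversion Hn; subst.
  destruct (g c) eqn:Ec; simpl.
  - rewrite filter_id; [lia|]. intros x Hx. destruct (g x) eqn:Ex; [|reflexivity].
    exfalso. assert (c = x) by (apply H; auto). subst; contradiction.
  - assert (length C <= S (length (filter (fun c => negb (g c)) C)))%nat.
    { apply IH; auto. }
    lia.
Qed.

Lemma count_A rho (C : list hseg) (P : list point) : NoDup C ->
  (forall c, In c C -> exists p, In p P /\ covers_seg rho p c) ->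
  (forall p a b, In a C -> In b C -> covers_seg rho p a -> covers_seg rho p b -> a = b) ->
  (length C <= list_sum (map (fun p => dec (exists c, In c C /\ covers_seg rho p c)) P))%nat.
Proof.
  revert C. induction P as [|p P IH]; intros C Hn Hc Hu.
  - destruct C as [|c C]; simpl; [lia|].
    destruct (Hc c (or_introl eq_refl)) as [p [[] _]].
  - simpl. unfold dec at 1. destruct excluded_middle_informative as [E|E].
    + set (g := fun c => if excluded_middle_informative (covers_seg rho p c) then true else false).
      set (C' := filter (fun c => negb (g c)) C).
      assert (Hlen : (length C <= S (length C'))%nat).
      { apply len_filter1; auto. intros a b Ha Hb Ga Gb. unfold g in Ga, Gb.
        destruct excluded_middle_informative in Ga; [|discriminate].
        destruct excluded_middle_informative in Gb; [|discriminate].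
        apply (Hu p); auto. }
      assert (HC' : forall c, In c C' <-> In c C /\ ~ covers_seg rho p c).
      { intros c. unfold C'. rewrite filter_In. unfold g.
        destruct excluded_middle_informative; simpl; intuition discriminate. }
      assert (IH' := IH C').
      assert (length C' <= list_sum (map (fun p0 => dec (exists c, In c C' /\ covers_seg rho p0 c)) P))%nat.
      { apply IH'.
        - apply NoDup_filter; auto.
        - intros c Hc'. apply HC' in Hc'. destruct Hc' as [Hc1 Hc2].
          destruct (Hc c Hc1) as [p0 [[<-|Hp0] Hcov]]; [tauto|]. eauto.
        - intros p0 a b Ha Hb. apply HC' in Ha; apply HC' in Hb. apply Hu; tauto. }
      assert (list_sum (map (fun p0 => dec (exists c, In c C' /\ covers_seg rho p0 c)) P) <=
              list_sum (map (fun p0 => dec (exists c, In c C /\ covers_seg rho p0 c)) P))%nat.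
      { apply sum_mono. intros x _. apply dec_mono. intros [c [H1 H2]]. exists c.
        apply HC' in H1. tauto. }
      lia.
    + assert (length C <= list_sum (map (fun p0 => dec (exists c, In c C /\ covers_seg rho p0 c)) P))%nat.
      { apply IH; auto. intros c Hc1. destruct (Hc c Hc1) as [p0 [[<-|Hp0] Hcov]].
        - exfalso; apply E; eauto.
        - eauto. }
      lia.
Qed.

Lemma strip_exists y0 rho t l : forall m n, (n + m = t)%nat -> (1 <= n)%nat ->
  y0 + (INR n - 1) * (sqrt 3 * rho) <= sy l -> exists j, in_strip y0 rho t j l.
Proof.
  induction m; intros n Hnm Hn Hy.
  - exists n. unfold in_strip. split; [lia|split; [auto|right; lia]].
  - destruct (Rlt_dec (sy l) (y0 + INR n * (sqrt 3 * rho))).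
    + exists n. unfold in_strip. split; [lia|split; [auto|left; auto]].
    + apply (IHm (S n)); try lia. rewrite S_INR. lra.
Qed.

Theorem lemma3 (x0 xm y0 h rho : R) (L : list hseg) (t : nat)
  (Q : nat -> list point) (Z : nat -> nat) (Ls : nat -> list hseg) (OPT : nat) :
  x0 <= xm -> 0 < h -> 0 < rho ->
  (forall l, In l L -> seg_in_rect x0 xm y0 h l) ->
  (* t = ceil (h / (sqrt 3 * rho)) *)
  INR t - 1 < h / (sqrt 3 * rho) <= INR t ->
  (* for every strip, Ls j = L_j and (Q j, Z j) is the output of the procedure *)
  (forall j : nat, (1 <= j <= t)%nat ->
     (forall l, In l (Ls j) <-> (In l L /\ in_strip y0 rho t j l)) /\
     greedy_run y0 rho j (Ls j) (Q j) (Z j)) ->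
  is_opt rho L OPT ->
  (covers_all rho (fun p => exists j, (1 <= j <= t)%nat /\ In p (Q j)) L /\
   card_le (fun p => exists j, (1 <= j <= t)%nat /\ In p (Q j)) (6 * OPT)) /\
  INR (fold_right Nat.add 0%nat (map Z (seq 1 t))) / 3 <= INR OPT.
Proof.
  intros Hx Hh Hr Hrect Ht HL Hopt.
  assert (Hs1 := sqrt3_gt1).
  assert (Hw : 0 < sqrt 3 * rho) by nra.
  assert (Hht : h <= INR t * (sqrt 3 * rho)).
  { destruct Ht as [_ Ht]. apply (Rmult_le_compat_r (sqrt 3 * rho)) in Ht; [|lra].
    unfold Rdiv in Ht. rewrite Rmult_assoc, Rinv_l in Ht by lra. lra. }
  assert (Ht1 : (1 <= t)%nat).
  { destruct t; [simpl in Hht; lra|lia]. }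
  assert (Hbd : forall j l, (1 <= j <= t)%nat -> In l (Ls j) ->
     sxl l <= sxr l /\
     y0 + (INR j - 1) * (sqrt 3 * rho) <= sy l <= y0 + (INR j - 1) * (sqrt 3 * rho) + sqrt 3 * rho).
  { intros j l Hj Hl. apply (proj1 (HL j Hj)) in Hl. destruct Hl as [HlL [_ [Hy1 Hy2]]].
    destruct (Hrect l HlL) as [_ [Ha [_ [_ Hb]]]]. repeat split; try lra.
    destruct Hy2 as [Hy2| ->]; lra. }
  destruct Hopt as [[P [HPlen HPcov]] _].
  assert (E : forall j, exists C, (1 <= j <= t)%nat -> length C = Z j /\
     (forall c, In c C -> In c (Ls j)) /\ NoDup C /\
     (forall a b, In a C -> In b C -> hipp_intersect rho a b -> a = b)).
  { intros j. destruct (classic (1 <= j <= t)%nat) as [Hj|Hj].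
    - destruct (greedy_chosen _ _ _ _ _ _ (proj2 (HL j Hj))) as [C HC]. exists C; auto.
    - exists []; intros; lia. }
  set (Cf := fun j => proj1_sig (constructive_indefinite_description _ (E j))).
  assert (HCf : forall j, (1 <= j <= t)%nat -> length (Cf j) = Z j /\
     (forall c, In c (Cf j) -> In c (Ls j)) /\ NoDup (Cf j) /\
     (forall a b, In a (Cf j) -> In b (Cf j) -> hipp_intersect rho a b -> a = b)).
  { intros j. exact (proj2_sig (constructive_indefinite_description _ (E j))). }
  assert (HZ : (list_sum (map Z (seq 1 t)) <= 3 * OPT)%nat).
  { set (ind := fun j p => dec (exists c, In c (Cf j) /\ covers_seg rho p c)).
    assert (S1 : (list_sum (map Z (seq 1 t)) <=
       list_sum (map (fun j => list_sum (map (fun p => ind j p) P)) (seq 1 t)))%nat).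
    { apply sum_mono. intros j Hj. apply in_seq in Hj.
      destruct (HCf j ltac:(lia)) as [H1 [H2 [H3 H4]]]. rewrite <- H1.
      apply count_A; auto.
      - intros c Hc. apply H2 in Hc. apply (proj1 (HL j ltac:(lia))) in Hc.
        apply (HPcov c (proj1 Hc)).
      - intros p a b Ha Hb Hpa Hpb. apply H4; auto. exists p; split; assumption. }
    rewrite sum_swap in S1.
    assert (S2 : (list_sum (map (fun p => list_sum (map (fun j => ind j p) (seq 1 t))) P)
                 <= 3 * length P)%nat).
    { apply sum_const. intros p _. apply sum3.
      - intros k; apply dec_le1.
      - intros j k Hj Hk Ej Ek Hjk.
        apply dec_one in Ej; apply dec_one in Ek.
        destruct Ej as [cj [Hcj Hpj]]; destruct Ek as [ck [Hck Hpk]].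
        destruct (HCf j ltac:(lia)) as [_ [Hj2 _]].
        destruct (HCf k ltac:(lia)) as [_ [Hk2 _]].
        apply Hj2 in Hcj; apply Hk2 in Hck.
        apply (proj1 (HL j ltac:(lia))) in Hcj.
        apply (proj1 (HL k ltac:(lia))) in Hck.
        destruct Hcj as [_ [_ [_ [Hcj | Hcj]]]]; [|lia].
        destruct Hck as [_ [_ [Hck _]]].
        pose proof (dist_y p cj) as Dj. pose proof (dist_y p ck) as Dk.
        unfold covers_seg in Hpj, Hpk.
        assert (Hkj : INR j + 3 <= INR k).
        { replace 3 with (INR 3) by (simpl; ring). rewrite <- plus_INR. apply le_INR; lia. }
        assert ((INR j + 2) * (sqrt 3 * rho) <= (INR k - 1) * (sqrt 3 * rho))
          by (apply Rmult_le_compat_r; lra).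
        revert Dj Dk. unfold Rabs; do 2 destruct Rcase_abs; intros; nra. }
    lia. }
  split; [split|].
  - intros l Hl. destruct (Hrect l Hl) as [_ [Hlr [_ [Hy _]]]].
    destruct (strip_exists y0 rho t l (t - 1) 1 ltac:(lia) ltac:(lia)) as [j Hj].
    { simpl. lra. }
    assert (Hjr : (1 <= j <= t)%nat) by apply Hj.
    assert (HlLs : In l (Ls j)) by (apply (proj1 (HL j Hjr)); auto).
    destruct (greedy_cover y0 rho j (Ls j) (Q j) (Z j) Hr (proj2 (HL j Hjr))
       (fun l' H => Hbd j l' Hjr H) l HlLs) as [p [Hp Hc]].
    exists p; split; [exists j; auto|exact Hc].
  - set (dpt := fun p q : point => excluded_middle_informative (p = q)).
    exists (nodup dpt (concat (map Q (seq 1 t)))). split; [apply NoDup_nodup|split].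
    + intros p. rewrite nodup_In, in_concat. split.
      * intros [q [Hq Hp]]. apply in_map_iff in Hq. destruct Hq as [j [<- Hj]].
        apply in_seq in Hj. exists j; split; [lia|auto].
      * intros [j [Hj Hp]]. exists (Q j); split; auto. apply in_map. apply in_seq; lia.
    + apply Nat.le_trans with (length (concat (map Q (seq 1 t)))).
      * apply NoDup_incl_length; [apply NoDup_nodup|]. intros x Hx0. apply nodup_In in Hx0; exact Hx0.
      * rewrite length_concat, map_map.
        apply Nat.le_trans with (list_sum (map (fun j => Z j + Z j)%nat (seq 1 t))).
        -- apply sum_mono. intros j Hj. apply in_seq in Hj.
           rewrite (greedy_len _ _ _ _ _ _ (proj2 (HL j ltac:(lia)))). lia.
        -- rewrite sum_add. lia.
  - change (fold_right Nat.add 0%nat (map Z (seq 1 t))) with (list_sum (map Z (seq 1 t))).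
    apply le_INR in HZ. rewrite mult_INR in HZ. simpl in HZ. lra.
Qed.
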